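(* Let $N\ge1$, $\alpha_1,\dots,\alpha_N\ge0$, let $b_1,\dots,b_N>0$ be pairwise distinct, set $\alpha=\sum_j\alpha_j$ and $$K(t)=\sum_{j=1}^N\alpha_jK_j(t),\qquad K_j(t)=\sum_{i=1}^jb_i\psi_i^je^{-b_it},\qquad \psi_i^j=\prod_{k=1,k\neq i}^j\frac{b_k}{b_k-b_i}.$$ Let $u$ be the solution of $\dot u(t)=-\alpha u(t)+\int_0^tK(t-s)u(s)\,ds$, $u(0)=u_0$. Then there is an $(N+1)\times(N+1)$ Markov generator $A$ and an initial vector $p(0)$ such that the solution $p$ of $\dot p=A^*p$ satisfies $p_0(t)=u(t)$ for all $t\ge0$; specifically one may take $A^*$ to be the matrix with first row $(-\alpha,b_1,0,\dots,0)$ and, for $j=1,\dots,N$, row $j$ having entry $\alpha_j$ in column $0$, $-b_j$ on the diagonal and $b_{j+1}$ in column $j+1$ (if $j<N$), zeros elsewhere, and $p(0)=(u_0,0,\dots,0)$.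
   Context: A Markov generator on $\mathbb{R}^{N+1}$ is a real matrix with nonnegative off-diagonal entries and zero row sums; $A^*$ denotes its transpose. Components of $p$ are indexed $p=(p_0,p_1,\dots,p_N)$. *)

(* Defs.v *)
From Stdlib Require Import Reals Lra Lia Arith List.
Import ListNotations.
Open Scope R_scope.

(* sum_range m n f = f m + ... + f n  (0 if n < m) *)
Definition sum_range (m n : nat) (f : nat -> R) : R :=
  fold_right (fun i acc => f i + acc) 0 (seq m (S n - m)).

Definition prod_range_except (m n i : nat) (f : nat -> R) : R :=
  fold_right (fun k acc => (if Nat.eq_dec k i then 1 else f k) * acc) 1
    (seq m (S n - m)).

Definition psi (b : nat -> R) (i j : nat) : R :=
  prod_range_except 1 j i (fun k => b k / (b k - b i)).

Definition Kj (b : nat -> R) (j : nat) (t : R) : R :=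
  sum_range 1 j (fun i => b i * psi b i j * exp (- b i * t)).

Definition Kfun (N : nat) (alpha b : nat -> R) (t : R) : R :=
  sum_range 1 N (fun j => alpha j * Kj b j t).

Definition alpha_sum (N : nat) (alpha : nat -> R) : R :=
  sum_range 1 N alpha.

Definition deriv_nonneg (f : R -> R) (t l : R) : Prop :=
  forall eps : R, 0 < eps -> exists delta : R, 0 < delta /\
    forall h : R, h <> 0 -> Rabs h < delta -> 0 <= t + h ->
      Rabs ((f (t + h) - f t) / h - l) < eps.

Definition markov_generator (N : nat) (A : nat -> nat -> R) : Prop :=
  (forall i j, (i <= N)%nat -> (j <= N)%nat -> i <> j -> 0 <= A i j) /\
  (forall i, (i <= N)%nat -> sum_range 0 N (fun j => A i j) = 0).

Definition Astar (N : nat) (alpha b : nat -> R) (r c : nat) : R :=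
  if Nat.eqb r 0 then
    (if Nat.eqb c 0 then - alpha_sum N alpha
     else if Nat.eqb c 1 then b 1%nat else 0)
  else if Nat.leb r N then
    (if Nat.eqb c 0 then alpha r
     else if Nat.eqb c r then - b r
     else if andb (Nat.eqb c (S r)) (Nat.ltb r N) then b (S r)
     else 0)
  else 0.

Definition Agen (N : nat) (alpha b : nat -> R) (i j : nat) : R :=
  Astar N alpha b j i.

Definition p_init (u0 : R) (i : nat) : R :=
  if Nat.eqb i 0 then u0 else 0.

Definition is_solution (N : nat) (alpha b : nat -> R) (u0 : R)
  (p : R -> nat -> R) : Prop :=
  (forall i, (i <= N)%nat -> p 0 i = p_init u0 i) /\
  (forall t, 0 <= t -> forall i, (i <= N)%nat ->
     deriv_nonneg (fun s => p s i) t
       (sum_range 0 N (fun c => Astar N alpha b i c * p t c))).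

(* Main.v *)
Require Import Defs.
From Stdlib Require Import Reals Lra Lia Arith List FunctionalExtensionality.
From Coquelicot Require Import Coquelicot.
Import ListNotations.
Open Scope R_scope.

Definition lsum (l : list nat) (f : nat -> R) : R :=
  fold_right (fun i acc => f i + acc) 0 l.

Lemma sr_lsum m n f : sum_range m n f = lsum (seq m (S n - m)) f.
Proof. reflexivity. Qed.

Lemma lsum_ext l f g : (forall k, In k l -> f k = g k) -> lsum l f = lsum l g.
Proof.
  induction l as [|a l IH]; simpl; intros H; [reflexivity|].
  rewrite H by auto. rewrite IH by auto. reflexivity.
Qed.

Lemma lsum_plus l f g : lsum l (fun k => f k + g k) = lsum l f + lsum l g.
Proof. induction l; simpl; [lra|rewrite IHl; lra]. Qed.

Lemma lsum_scal l c f : lsum l (fun k => c * f k) = c * lsum l f.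
Proof. induction l; simpl; [lra|rewrite IHl; lra]. Qed.

Lemma lsum_le l f g : (forall k, In k l -> f k <= g k) -> lsum l f <= lsum l g.
Proof.
  induction l as [|a l IH]; simpl; intros H; [lra|].
  apply Rplus_le_compat; auto.
Qed.

Lemma lsum_nonneg_term l f i : (forall k, In k l -> 0 <= f k) -> In i l -> f i <= lsum l f.
Proof.
  induction l as [|a l IH]; simpl; intros H Hi; [contradiction|].
  destruct Hi as [<-|Hi].
  - assert (0 <= lsum l f).
    { apply Rle_trans with (lsum l (fun _ => 0)).
      + clear. induction l; simpl; lra.
      + apply lsum_le. intros; apply H; auto. }
    lra.
  - assert (f a >= 0) by (apply Rle_ge, H; auto). specialize (IH (fun k Hk => H k (or_intror Hk)) Hi). lra.
Qed.

Lemma lsum_abs l f : Rabs (lsum l f) <= lsum l (fun k => Rabs (f k)).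
Proof.
  induction l; simpl. rewrite Rabs_R0; lra.
  eapply Rle_trans; [apply Rabs_triang|]. lra.
Qed.

Lemma in_seq' k a len : In k (seq a len) <-> (a <= k < a + len)%nat.
Proof. apply in_seq. Qed.

Lemma in_range k m n : In k (seq m (S n - m)) <-> (m <= k <= n)%nat.
Proof. rewrite in_seq'. lia. Qed.

Lemma sr_ext m n f g : (forall k, (m <= k <= n)%nat -> f k = g k) -> sum_range m n f = sum_range m n g.
Proof. intros H. apply lsum_ext. intros k Hk. apply H. apply in_range; auto. Qed.

Lemma sr_plus m n f g : sum_range m n (fun k => f k + g k) = sum_range m n f + sum_range m n g.
Proof. apply lsum_plus. Qed.

Lemma sr_scal m n c f : sum_range m n (fun k => c * f k) = c * sum_range m n f.
Proof. apply lsum_scal. Qed.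

Lemma sr_minus m n f g : sum_range m n (fun k => f k - g k) = sum_range m n f - sum_range m n g.
Proof.
  replace (fun k => f k - g k) with (fun k => f k + (-1) * g k) by (apply functional_extensionality; intros; ring).
  rewrite sr_plus, sr_scal. ring.
Qed.

Lemma sr_le m n f g : (forall k, (m <= k <= n)%nat -> f k <= g k) -> sum_range m n f <= sum_range m n g.
Proof. intros H. apply lsum_le. intros k Hk. apply H. apply in_range; auto. Qed.

Lemma sr_term m n f i : (forall k, (m <= k <= n)%nat -> 0 <= f k) -> (m <= i <= n)%nat -> f i <= sum_range m n f.
Proof. intros H Hi. apply lsum_nonneg_term. intros k Hk; apply H, in_range; auto. apply in_range; auto. Qed.

Lemma sr_abs m n f : Rabs (sum_range m n f) <= sum_range m n (fun k => Rabs (f k)).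
Proof. apply lsum_abs. Qed.

Lemma sr_empty m n f : (n < m)%nat -> sum_range m n f = 0.
Proof. intros H. unfold sum_range. replace (S n - m)%nat with 0%nat by lia. reflexivity. Qed.

Lemma sr_first m n f : (m <= n)%nat -> sum_range m n f = f m + sum_range (S m) n f.
Proof.
  intros H. unfold sum_range. replace (S n - m)%nat with (S (S n - S m)) by lia. reflexivity.
Qed.

Lemma sr_last m n f : (m <= S n)%nat -> sum_range m (S n) f = sum_range m n f + f (S n).
Proof.
  intros H. unfold sum_range. replace (S (S n) - m)%nat with (S (S n - m)) by lia.
  rewrite seq_S, fold_right_app. cbn [fold_right]. replace (m + (S n - m))%nat with (S n) by lia.
  generalize (seq m (S n - m)). intros l; induction l; cbn [fold_right]. ring. rewrite IHl. ring.
Qed.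

Lemma sr_single m f : sum_range m m f = f m.
Proof. rewrite sr_first by lia. rewrite sr_empty by lia. ring. Qed.

Lemma lsum_ind a len k v : lsum (seq a len) (fun c => if Nat.eqb c k then v else 0) =
  if andb (Nat.leb a k) (Nat.ltb k (a + len)) then v else 0.
Proof.
  revert a. induction len; intros a; cbn [seq lsum fold_right].
  - destruct (Nat.leb a k) eqn:E1; destruct (Nat.ltb k (a+0)) eqn:E2; simpl; auto.
    apply Nat.leb_le in E1; apply Nat.ltb_lt in E2; lia.
  - fold (lsum (seq (S a) len) (fun c => if Nat.eqb c k then v else 0)). rewrite IHlen.
    destruct (Nat.eqb a k) eqn:E; destruct (Nat.leb (S a) k) eqn:E1; destruct (Nat.ltb k (S a + len)) eqn:E2;
    destruct (Nat.leb a k) eqn:E3; destruct (Nat.ltb k (a + S len)) eqn:E4; simpl;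
    rewrite ?Nat.eqb_eq, ?Nat.eqb_neq, ?Nat.leb_le, ?Nat.leb_nle, ?Nat.ltb_lt, ?Nat.ltb_nlt in *;
    try lia; lra.
Qed.

Lemma sr_ind m n k v : (m <= k <= n)%nat -> sum_range m n (fun c => if Nat.eqb c k then v else 0) = v.
Proof.
  intros H. unfold sum_range. fold (lsum (seq m (S n - m)) (fun c => if Nat.eqb c k then v else 0)).
  rewrite lsum_ind. replace (Nat.leb m k) with true by (symmetry; apply Nat.leb_le; lia).
  replace (Nat.ltb k (m + (S n - m))) with true by (symmetry; apply Nat.ltb_lt; lia). reflexivity.
Qed.

Lemma sr_zero m n : sum_range m n (fun _ => 0) = 0.
Proof. unfold sum_range. generalize (seq m (S n - m)); intros l; induction l; simpl; lra. Qed.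

Lemma sr_scal_r m n c f : sum_range m n (fun k => f k * c) = sum_range m n f * c.
Proof. rewrite Rmult_comm, <- sr_scal. apply sr_ext. intros; ring. Qed.

Definition lprod (l : list nat) (i : nat) (f : nat -> R) : R :=
  fold_right (fun k acc => (if Nat.eq_dec k i then 1 else f k) * acc) 1 l.

Lemma pre_first m n i f : (m <= n)%nat ->
  prod_range_except m n i f = (if Nat.eq_dec m i then 1 else f m) * prod_range_except (S m) n i f.
Proof. intros H. unfold prod_range_except. replace (S n - m)%nat with (S (S n - S m)) by lia. reflexivity. Qed.

Lemma pre_last m n i f : (m <= S n)%nat ->
  prod_range_except m (S n) i f = prod_range_except m n i f * (if Nat.eq_dec (S n) i then 1 else f (S n)).
Proof.
  intros H. unfold prod_range_except. replace (S (S n) - m)%nat with (S (S n - m)) by lia.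
  rewrite seq_S, fold_right_app. cbn [fold_right]. replace (m + (S n - m))%nat with (S n) by lia.
  generalize (seq m (S n - m)). intros l; induction l; cbn [fold_right]. ring. rewrite IHl. ring.
Qed.

Lemma pre_empty m n i f : (n < m)%nat -> prod_range_except m n i f = 1.
Proof. intros H. unfold prod_range_except. replace (S n - m)%nat with 0%nat by lia. reflexivity. Qed.

Lemma pre_self m f : prod_range_except m m m f = 1.
Proof. rewrite pre_first by lia. rewrite pre_empty by lia. destruct (Nat.eq_dec m m); [ring|congruence]. Qed.

Lemma lprod_mult l i f g : lprod l i (fun k => f k * g k) = lprod l i f * lprod l i g.
Proof. induction l; simpl. ring. rewrite IHl. destruct (Nat.eq_dec a i); ring. Qed.

Lemma pre_mult m n i f g : prod_range_except m n i (fun k => f k * g k) =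
  prod_range_except m n i f * prod_range_except m n i g.
Proof. apply lprod_mult. Qed.

Lemma lprod_out l i i' f : ~ In i l -> ~ In i' l -> lprod l i f = lprod l i' f.
Proof.
  induction l; simpl; intros H1 H2; auto.
  rewrite IHl by tauto. destruct (Nat.eq_dec a i); destruct (Nat.eq_dec a i'); subst; tauto.
Qed.

Lemma lprod_pull a len i i' f : (a <= i < a + len)%nat -> (i' < a)%nat ->
  f i * lprod (seq a len) i f = lprod (seq a len) i' f.
Proof.
  revert a. induction len; intros a H1 H2; [lia|]. simpl.
  destruct (Nat.eq_dec a i); destruct (Nat.eq_dec a i'); try lia.
  - subst. rewrite (lprod_out _ i i'); [ring| |]; rewrite in_seq; lia.
  - rewrite <- (IHlen (S a)) by lia. ring.
Qed.

Lemma pre_pull j m i f : (j <= i <= m)%nat -> (0 < j)%nat ->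
  f i * prod_range_except j m i f = prod_range_except j m 0 f.
Proof. intros H H0. apply lprod_pull; lia. Qed.

Section Distinct.
Variable N : nat.
Variable b : nat -> R.
Hypothesis Hd : forall i j, (1 <= i <= N)%nat -> (1 <= j <= N)%nat -> i <> j -> b i <> b j.

Definition w j m i := prod_range_except j m i (fun k => / (b k - b i)).
Definition Wsum j m := sum_range j m (w j m).

Lemma Rsub_neq x y : x <> y -> x - y <> 0.
Proof. intros H; lra. Qed.

Lemma W_rec j m' : (1 <= j <= m')%nat -> (S m' <= N)%nat ->
  Wsum (S j) (S m') - Wsum j m' = (b j - b (S m')) * Wsum j (S m').
Proof.
  intros H1 H2. unfold Wsum.
  rewrite (sr_first j (S m')) by lia. rewrite (sr_last (S j) m') by lia.
  rewrite (sr_last (S j) m') by lia. rewrite (sr_first j m') by lia.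
  assert (Hmid : sum_range (S j) m' (w (S j) (S m')) - sum_range (S j) m' (w j m') =
     (b j - b (S m')) * sum_range (S j) m' (w j (S m'))).
  { rewrite <- sr_minus, <- sr_scal. apply sr_ext. intros i Hi.
    assert (HZ1 : w j (S m') i = / (b j - b i) * w (S j) (S m') i).
    { unfold w. rewrite pre_first by lia. destruct (Nat.eq_dec j i); [lia|reflexivity]. }
    assert (HZ2 : w j (S m') i = w j m' i * / (b (S m') - b i)).
    { unfold w. rewrite pre_last by lia. destruct (Nat.eq_dec (S m') i); [lia|reflexivity]. }
    assert (n1 : b j - b i <> 0) by (apply Rsub_neq, Hd; lia).
    assert (n2 : b (S m') - b i <> 0) by (apply Rsub_neq, Hd; lia).
    assert (E1 : w (S j) (S m') i = (b j - b i) * w j (S m') i) by (rewrite HZ1; field; auto).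
    assert (E2 : w j m' i = (b (S m') - b i) * w j (S m') i) by (rewrite HZ2; field; auto).
    rewrite E1, E2. ring. }
  assert (n3 : b (S m') - b j <> 0) by (apply Rsub_neq, Hd; lia).
  assert (n4 : b j - b (S m') <> 0) by (apply Rsub_neq, Hd; lia).
  assert (HA : w j (S m') j = w j m' j * / (b (S m') - b j)).
  { unfold w. rewrite pre_last by lia. destruct (Nat.eq_dec (S m') j); [lia|reflexivity]. }
  assert (HB : w j (S m') (S m') = / (b j - b (S m')) * w (S j) (S m') (S m')).
  { unfold w. rewrite pre_first by lia. destruct (Nat.eq_dec j (S m')); [lia|reflexivity]. }
  assert (E3 : w j m' j = (b (S m') - b j) * w j (S m') j) by (rewrite HA; field; auto).
  assert (E4 : w (S j) (S m') (S m') = (b j - b (S m')) * w j (S m') (S m')) by (rewrite HB; field; auto).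
  rewrite E3, E4. lra.
Qed.

Lemma W_self j : Wsum j j = 1.
Proof. unfold Wsum, w. rewrite sr_single. apply pre_self. Qed.

Lemma W_zero d : forall j, (1 <= j)%nat -> (j + S d <= N)%nat -> Wsum j (j + S d) = 0.
Proof.
  induction d; intros j H1 H2.
  - replace (j + 1)%nat with (S j) by lia. pose proof (W_rec j j ltac:(lia) ltac:(lia)) as R.
    rewrite !W_self in R.
    assert (n : b j - b (S j) <> 0) by (apply Rsub_neq, Hd; lia).
    apply (Rmult_eq_reg_l (b j - b (S j))); auto. lra.
  - replace (j + S (S d))%nat with (S (j + S d)) by lia.
    pose proof (W_rec j (j + S d) ltac:(lia) ltac:(lia)) as R.
    replace (S (j + S d)) with (S j + S d)%nat in R by lia.
    rewrite (IHd (S j)) in R by lia. rewrite (IHd j) in R by lia.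
    replace (S (j + S d)) with (S j + S d)%nat by lia.
    assert (n : b j - b (S j + S d) <> 0) by (apply Rsub_neq, Hd; lia).
    apply (Rmult_eq_reg_l (b j - b (S j + S d))); auto. lra.
Qed.

Definition Pi j m i := prod_range_except j m i (fun k => b k / (b k - b i)).

Lemma Z_ident j m : (1 <= j)%nat -> (j < m <= N)%nat ->
  sum_range j m (fun i => b i * Pi j m i) = 0.
Proof.
  intros H1 H2.
  transitivity (sum_range j m (fun i => prod_range_except j m 0 b * w j m i)).
  - apply sr_ext. intros i Hi. unfold Pi, w, Rdiv.
    rewrite (pre_mult j m i b (fun k => / (b k - b i))).
    rewrite <- (pre_pull j m i b) by lia. ring.
  - rewrite sr_scal. fold (Wsum j m). replace m with (j + S (m - j - 1))%nat by lia.
    rewrite W_zero by lia. ring.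
Qed.

Lemma Pi_self j : Pi j j j = 1.
Proof. apply pre_self. Qed.

Lemma Pi_step j m i : (1 <= j)%nat -> (j < i <= m)%nat -> (m <= N)%nat ->
  (b j - b i) * Pi j m i = b j * Pi (S j) m i.
Proof.
  intros H1 H2 H3. unfold Pi. rewrite (pre_first j m) by lia.
  destruct (Nat.eq_dec j i) as [e|e]; [lia|].
  assert (nn : b j - b i <> 0) by (apply Rsub_neq, Hd; lia). field. auto.
Qed.

End Distinct.

Definition ext0 (f : R -> R) (l : R) (x : R) : R :=
  if Rle_dec 0 x then f x else f 0 + l * x.

Lemma ext0_eq f l x : 0 <= x -> ext0 f l x = f x.
Proof. intros H. unfold ext0. destruct (Rle_dec 0 x); [reflexivity|lra]. Qed.

Lemma dn_ext f t l l0 : 0 <= t -> deriv_nonneg f t l -> (t = 0 -> l0 = l) ->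
  derivable_pt_lim (ext0 f l0) t l.
Proof.
  intros Ht Hd Hl eps Heps. destruct (Hd eps Heps) as [delta [Hdel H]].
  destruct (Rle_lt_or_eq_dec 0 t Ht) as [Ht'|Ht'].
  - assert (Hp : 0 < Rmin delta t) by (apply Rmin_pos; lra).
    exists (mkposreal _ Hp). intros h Hh Hha. simpl in Hha.
    assert (Rabs h < delta) by (eapply Rlt_le_trans; [apply Hha|apply Rmin_l]).
    assert (Rabs h < t) by (eapply Rlt_le_trans; [apply Hha|apply Rmin_r]).
    assert (0 <= t + h) by (apply Rabs_def2 in H1; lra).
    rewrite !ext0_eq by lra. apply H; auto.
  - subst t. specialize (Hl eq_refl). subst l0. exists (mkposreal _ Hdel). intros h Hh Hha. simpl in Hha.
    destruct (Rle_dec 0 (0 + h)) as [Hp|Hp].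
    + rewrite !ext0_eq by lra. apply H; auto.
    + unfold ext0. destruct (Rle_dec 0 (0+h)); [lra|]. destruct (Rle_dec 0 0); [|lra].
      replace ((f 0 + l * (0 + h) - f 0) / h - l) with 0 by (field; auto). rewrite Rabs_R0; lra.
Qed.

Lemma dpl_dn F f t l : derivable_pt_lim F t l -> (forall x, 0 <= x -> F x = f x) -> 0 <= t ->
  deriv_nonneg f t l.
Proof.
  intros Hd Hag Ht eps Heps. destruct (Hd eps Heps) as [delta H].
  exists delta. split; [apply cond_pos|]. intros h Hh Hha Hth.
  rewrite <- !Hag by lra. apply H; auto.
Qed.

Lemma dn_plus f g t l1 l2 : 0 <= t -> deriv_nonneg f t l1 -> deriv_nonneg g t l2 ->
  deriv_nonneg (fun s => f s + g s) t (l1 + l2).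
Proof.
  intros Ht H1 H2. apply (dpl_dn (plus_fct (ext0 f l1) (ext0 g l2))); auto.
  - apply derivable_pt_lim_plus; apply dn_ext; auto.
  - intros x Hx. unfold plus_fct. rewrite !ext0_eq; auto.
Qed.

Lemma dn_mult f g t l1 l2 : 0 <= t -> deriv_nonneg f t l1 -> deriv_nonneg g t l2 ->
  deriv_nonneg (fun s => f s * g s) t (l1 * g t + f t * l2).
Proof.
  intros Ht H1 H2. rewrite <- (ext0_eq f l1 t Ht), <- (ext0_eq g l2 t Ht).
  apply (dpl_dn (mult_fct (ext0 f l1) (ext0 g l2))); auto.
  - apply derivable_pt_lim_mult; apply dn_ext; auto.
  - intros x Hx. unfold mult_fct. rewrite !ext0_eq; auto.
Qed.

Lemma dn_const c t : 0 <= t -> deriv_nonneg (fun _ => c) t 0.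
Proof. intros Ht. apply (dpl_dn (fct_cte c)); auto. apply derivable_pt_lim_const. Qed.

Lemma dn_scal c f t l : 0 <= t -> deriv_nonneg f t l -> deriv_nonneg (fun s => c * f s) t (c * l).
Proof.
  intros Ht H. replace (c * l) with (0 * f t + c * l) by ring.
  apply (dn_mult (fun _ => c) f); auto. apply dn_const; auto.
Qed.

Lemma dn_minus f g t l1 l2 : 0 <= t -> deriv_nonneg f t l1 -> deriv_nonneg g t l2 ->
  deriv_nonneg (fun s => f s - g s) t (l1 - l2).
Proof.
  intros Ht H1 H2. replace (l1 - l2) with (l1 + (-1) * l2) by ring.
  assert (E : (fun s => f s - g s) = (fun s => f s + (-1) * g s)) by (apply functional_extensionality; intros; ring).
  rewrite E. apply dn_plus; auto. apply dn_scal; auto.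
Qed.

Lemma dn_ext_fun f g t l : (forall s, f s = g s) -> deriv_nonneg f t l -> deriv_nonneg g t l.
Proof. intros E H. replace g with f; auto. apply functional_extensionality; auto. Qed.

Lemma dn_lsum (l : list nat) (f : nat -> R -> R) (d : nat -> R) t : 0 <= t ->
  (forall k, In k l -> deriv_nonneg (f k) t (d k)) ->
  deriv_nonneg (fun s => lsum l (fun k => f k s)) t (lsum l d).
Proof.
  intros Ht. induction l as [|a l IH]; intros H; simpl.
  - apply dn_const; auto.
  - apply (dn_plus (f a) (fun s => lsum l (fun k => f k s))); auto with datatypes.
Qed.

Lemma dn_sum m n (f : nat -> R -> R) (d : nat -> R) t : 0 <= t ->
  (forall k, (m <= k <= n)%nat -> deriv_nonneg (f k) t (d k)) ->
  deriv_nonneg (fun s => sum_range m n (fun k => f k s)) t (sum_range m n d).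
Proof.
  intros Ht H. apply dn_lsum; auto. intros k Hk. apply H. apply in_range; auto.
Qed.

Lemma dn_nonincr (G dG : R -> R) :
  (forall t, 0 <= t -> deriv_nonneg G t (dG t)) -> (forall t, 0 <= t -> dG t <= 0) ->
  forall t, 0 <= t -> G t <= G 0.
Proof.
  intros HG Hneg t Ht.
  destruct (Rle_lt_or_eq_dec 0 t Ht) as [Ht'|Ht']; [|subst; lra].
  destruct (MVT_gen (ext0 G (dG 0)) 0 t dG) as [c [Hc E]].
  - intros x Hx. rewrite Rmin_left, Rmax_right in Hx by lra.
    apply is_derive_Reals. apply dn_ext; [lra | apply HG; lra | intros; lra].
  - intros x Hx. rewrite Rmin_left, Rmax_right in Hx by lra.
    apply derivable_continuous_pt. exists (dG x). apply dn_ext; [lra | apply HG; lra | intros ->; reflexivity].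
  - rewrite Rmin_left, Rmax_right in Hc by lra.
    rewrite !ext0_eq in E by lra. specialize (Hneg c ltac:(lra)).
    assert (dG c * (t - 0) <= 0) by (apply Rmult_le_0_r; lra). lra.
Qed.

Lemma dn_exp c t : 0 <= t -> deriv_nonneg (fun s => exp (c * s)) t (c * exp (c * t)).
Proof.
  intros Ht. apply (dpl_dn (fun s => exp (c * s))); auto.
  apply is_derive_Reals. auto_derive; auto. ring.
Qed.


Lemma abs_prod_le x y E : x * x <= E -> y * y <= E -> Rabs (x * y) <= E.
Proof. intros H1 H2. rewrite Rabs_mult. unfold Rabs; destruct (Rcase_abs x); destruct (Rcase_abs y); nra. Qed.

Lemma ode_unique (N : nat) (A : nat -> nat -> R) (q : R -> nat -> R) :
  (forall i, (i <= N)%nat -> q 0 i = 0) ->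
  (forall t, 0 <= t -> forall i, (i <= N)%nat ->
     deriv_nonneg (fun s => q s i) t (sum_range 0 N (fun c => A i c * q t c))) ->
  forall t, 0 <= t -> forall i, (i <= N)%nat -> q t i = 0.
Proof.
  intros H0 Hd.
  set (M := sum_range 0 N (fun i => sum_range 0 N (fun c => Rabs (A i c)))).
  set (E := fun s => sum_range 0 N (fun i => q s i * q s i)).
  set (d := fun t i => sum_range 0 N (fun c => A i c * q t c)).
  set (dE := fun t => sum_range 0 N (fun i => d t i * q t i + q t i * d t i)).
  assert (HE : forall t, 0 <= t -> deriv_nonneg E t (dE t)).
  { intros t Ht. unfold E, dE. apply (dn_sum 0 N (fun i s => q s i * q s i)); auto.
    intros k Hk. apply (dn_mult (fun s => q s k) (fun s => q s k)); auto; apply Hd; auto; lia. }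
  assert (Eterm : forall t i, (i <= N)%nat -> q t i * q t i <= E t).
  { intros t i Hi. unfold E. apply (sr_term 0 N (fun i => q t i * q t i)); [|lia].
    intros; nra. }
  assert (Enn : forall t, 0 <= E t).
  { intros t. apply Rle_trans with (sum_range 0 N (fun _ => 0)). rewrite sr_zero; lra.
    apply sr_le. intros; nra. }
  assert (Hb : forall t, dE t <= 2 * M * E t).
  { intros t. unfold dE, M. rewrite Rmult_assoc, <- sr_scal_r, <- sr_scal.
    apply sr_le. intros i Hi.
    replace (d t i * q t i + q t i * d t i) with (2 * (q t i * d t i)) by ring.
    apply Rmult_le_compat_l; [lra|].
    unfold d. rewrite <- sr_scal, <- sr_scal_r. apply sr_le. intros c Hc.
    apply Rle_trans with (Rabs (A i c) * Rabs (q t c * q t i)).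
    - rewrite <- Rabs_mult. replace (q t i * (A i c * q t c)) with (A i c * (q t c * q t i)) by ring.
      apply Rle_abs.
    - apply Rmult_le_compat_l. apply Rabs_pos.
      apply abs_prod_le; apply Eterm; lia. }
  set (G := fun s => E s * exp (-(2*M) * s)).
  set (dG := fun t => dE t * exp (-(2*M) * t) + E t * (-(2*M) * exp (-(2*M) * t))).
  assert (HG : forall t, 0 <= t -> deriv_nonneg G t (dG t)).
  { intros t Ht. apply (dn_mult E (fun s => exp (-(2*M) * s))); auto. apply dn_exp; auto. }
  assert (HGn : forall t, 0 <= t -> dG t <= 0).
  { intros t Ht. unfold dG. pose proof (exp_pos (-(2*M) * t)). specialize (Hb t).
    assert ((dE t - 2 * M * E t) * exp (- (2 * M) * t) <= 0) by (apply Rmult_le_0_r; lra). lra. }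
  assert (E0 : E 0 = 0).
  { unfold E. transitivity (sum_range 0 N (fun _ => 0)); [|apply sr_zero]. apply sr_ext. intros k Hk. rewrite (H0 k) by lia. ring. }
  intros t Ht i Hi.
  pose proof (dn_nonincr G dG HG HGn t Ht) as Hm. unfold G in Hm. rewrite E0 in Hm.
  pose proof (exp_pos (-(2*M) * t)). pose proof (Enn t).
  assert (E t <= 0) by nra. pose proof (Eterm t i Hi). nra.
Qed.

Lemma RInt_scal_R f a b c : ex_RInt f a b -> RInt (fun x => c * f x) a b = c * RInt f a b.
Proof. intros H. exact (RInt_scal f a b c H). Qed.
Lemma ex_RInt_scal_R f a b c : ex_RInt f a b -> ex_RInt (fun x => c * f x) a b.
Proof. intros H. exact (ex_RInt_scal f a b c H). Qed.

Lemma RInt_lsum (l : list nat) (f : nat -> R -> R) a c :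
  (forall k, In k l -> ex_RInt (f k) a c) ->
  ex_RInt (fun s => lsum l (fun k => f k s)) a c /\
  RInt (fun s => lsum l (fun k => f k s)) a c = lsum l (fun k => RInt (f k) a c).
Proof.
  induction l as [|x l IH]; intros H; simpl.
  - split. apply ex_RInt_const. rewrite RInt_const. apply Rmult_0_r.
  - assert (Hl : forall k, In k l -> ex_RInt (f k) a c) by (intros; apply H; right; auto).
    destruct (IH Hl) as [IH1 IH2].
    assert (Hx : ex_RInt (f x) a c) by (apply H; left; auto).
    split.
    + exact (ex_RInt_plus (f x) _ a c Hx IH1).
    + rewrite <- IH2. exact (RInt_plus (f x) _ a c Hx IH1).
Qed.

Lemma RInt_sr m n (f : nat -> R -> R) a c :
  (forall k, (m <= k <= n)%nat -> ex_RInt (f k) a c) ->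
  ex_RInt (fun s => sum_range m n (fun k => f k s)) a c /\
  RInt (fun s => sum_range m n (fun k => f k s)) a c = sum_range m n (fun k => RInt (f k) a c).
Proof. intros H. apply RInt_lsum. intros k Hk. apply H. apply in_range; auto. Qed.

Lemma dn_of_is_derive f t l : 0 <= t -> is_derive f t l -> deriv_nonneg f t l.
Proof. intros Ht H. apply (dpl_dn f); auto. apply is_derive_Reals; auto. Qed.

Lemma dn_val f t l l' : deriv_nonneg f t l -> l = l' -> deriv_nonneg f t l'.
Proof. intros H <-; auto. Qed.

Definition ut (u : R -> R) x := u (Rmax 0 x).

Lemma Rmax0_lip z x : Rabs (Rmax 0 z - Rmax 0 x) <= Rabs (z - x).
Proof.
  unfold Rmax. destruct (Rle_dec 0 z); destruct (Rle_dec 0 x);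
  unfold Rabs; repeat destruct Rcase_abs; lra.
Qed.

Lemma Rmax0_cont x : continuity_pt (Rmax 0) x.
Proof.
  apply continuity_pt_locally. intros eps. exists eps. intros z Hz.
  eapply Rle_lt_trans; [apply Rmax0_lip|]. apply Hz.
Qed.

Lemma ut_cont u : (forall t, 0 <= t -> exists l, deriv_nonneg u t l) -> forall x, continuity_pt (ut u) x.
Proof.
  intros Hu x. assert (Hy : 0 <= Rmax 0 x) by apply Rmax_l.
  destruct (Hu _ Hy) as [l Hl].
  assert (Hc : continuity_pt (ext0 u l) (Rmax 0 x)).
  { apply derivable_continuous_pt. exists l. apply dn_ext; auto. }
  apply (continuity_pt_ext (comp (ext0 u l) (Rmax 0))).
  - intros z. unfold comp, ut. apply ext0_eq, Rmax_l.
  - apply continuity_pt_comp; auto. apply Rmax0_cont.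
Qed.

Section Exist.
Variable N : nat.
Variable alpha b : nat -> R.
Variable u : R -> R.
Hypothesis Hb : forall j, (1 <= j <= N)%nat -> 0 < b j.
Hypothesis Hd : forall i j, (1 <= i <= N)%nat -> (1 <= j <= N)%nat -> i <> j -> b i <> b j.
Hypothesis Hu : forall t, 0 <= t -> exists l, deriv_nonneg u t l.

Definition gfun i s := exp (b i * s) * ut u s.
Definition Ef i t := RInt (gfun i) 0 t.
Definition X i t := exp (- b i * t) * Ef i t.
Definition Phi j m t := sum_range j m (fun i => b i * Pi b j m i * X i t).
Definition dPhi j m t := sum_range j m (fun i => b i * Pi b j m i * (- b i * X i t + ut u t)).
Definition ptil (t : R) (i : nat) : R :=
  if Nat.eqb i 0 then u t else / b i * sum_range i N (fun m => alpha m * Phi i m t).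

Lemma gfun_cont i x : continuity_pt (gfun i) x.
Proof.
  apply (continuity_pt_mult (fun s => exp (b i * s)) (ut u)).
  - apply derivable_continuous_pt. exists (b i * exp (b i * x)).
    apply is_derive_Reals. auto_derive; auto. ring.
  - apply ut_cont; auto.
Qed.

Lemma gfun_int i a c : ex_RInt (gfun i) a c.
Proof. apply (ex_RInt_continuous (V := R_CompleteNormedModule)). intros z _. apply continuity_pt_filterlim, gfun_cont. Qed.

Lemma Ef_derive i t : is_derive (Ef i) t (gfun i t).
Proof.
  apply (is_derive_RInt (V := R_CompleteNormedModule) (gfun i) (Ef i) 0 t).
  - apply filter_forall. intros y. unfold Ef. apply (RInt_correct (V := R_CompleteNormedModule)), gfun_int.
  - apply continuity_pt_filterlim, gfun_cont.
Qed.

Lemma X_dn i t : 0 <= t -> deriv_nonneg (X i) t (- b i * X i t + ut u t).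
Proof.
  intros Ht. unfold X.
  apply dn_val with ((- b i) * exp (- b i * t) * Ef i t + exp (- b i * t) * gfun i t).
  - apply (dn_mult (fun s => exp (- b i * s)) (Ef i)); auto.
    + apply dn_exp; auto.
    + apply dn_of_is_derive; auto. apply Ef_derive.
  - unfold gfun. rewrite <- Rmult_assoc, <- exp_plus.
    replace (- b i * t + b i * t) with 0 by ring. rewrite exp_0. ring.
Qed.

Lemma Phi_dn j m t : 0 <= t -> deriv_nonneg (Phi j m) t (dPhi j m t).
Proof.
  intros Ht. unfold Phi, dPhi.
  apply (dn_sum j m (fun i s => b i * Pi b j m i * X i s)); auto.
  intros k Hk. apply dn_scal; auto. apply X_dn; auto.
Qed.

Lemma dPhi_self j t : dPhi j j t = b j * (- b j * X j t + ut u t).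
Proof. unfold dPhi. rewrite sr_single, Pi_self. ring. Qed.

Lemma Phi_self j t : Phi j j t = b j * X j t.
Proof. unfold Phi. rewrite sr_single, Pi_self. ring. Qed.

Lemma dPhi_step j m t : (1 <= j)%nat -> (j < m <= N)%nat ->
  dPhi j m t = - b j * Phi j m t + b j * Phi (S j) m t.
Proof.
  intros H1 H2. unfold dPhi.
  transitivity (sum_range j m (fun i => b i * Pi b j m i * (- b i * X i t))
                + sum_range j m (fun i => b i * Pi b j m i) * ut u t).
  { rewrite <- sr_scal_r, <- sr_plus. apply sr_ext. intros; ring. }
  rewrite (Z_ident N b Hd j m) by lia. rewrite Rmult_0_l, Rplus_0_r.
  unfold Phi. rewrite !(sr_first j m) by lia.
  assert (HS : sum_range (S j) m (fun i => b i * Pi b j m i * (- b i * X i t)) =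
     - b j * sum_range (S j) m (fun i => b i * Pi b j m i * X i t)
     + b j * sum_range (S j) m (fun i => b i * Pi b (S j) m i * X i t)).
  { rewrite <- !sr_scal, <- sr_plus. apply sr_ext. intros i Hi.
    pose proof (Pi_step N b Hd j m i ltac:(lia) ltac:(lia) ltac:(lia)) as HP.
    replace (b j * (b i * Pi b (S j) m i * X i t)) with (b i * X i t * (b j * Pi b (S j) m i)) by ring.
    rewrite <- HP. ring. }
  rewrite HS. ring.
Qed.

Lemma key j t : (1 <= j <= N)%nat ->
  sum_range j N (fun m => alpha m * dPhi j m t) =
  b j * alpha j * ut u t - b j * sum_range j N (fun m => alpha m * Phi j m t)
  + b j * sum_range (S j) N (fun m => alpha m * Phi (S j) m t).
Proof.
  intros H. rewrite !(sr_first j N) by lia. rewrite dPhi_self, Phi_self.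
  transitivity (alpha j * (b j * (- b j * X j t + ut u t)) +
     sum_range (S j) N (fun m => - b j * (alpha m * Phi j m t) + b j * (alpha m * Phi (S j) m t))).
  - f_equal. apply sr_ext. intros m Hm. rewrite dPhi_step by lia. ring.
  - rewrite sr_plus, !sr_scal. ring.
Qed.

End Exist.

Ltac bool_cases :=
  repeat match goal with
  | |- context [Nat.eqb ?a ?b] => let E := fresh "E" in destruct (Nat.eqb a b) eqn:E
  | |- context [Nat.ltb ?a ?b] => let E := fresh "E" in destruct (Nat.ltb a b) eqn:E
  | |- context [Nat.leb ?a ?b] => let E := fresh "E" in destruct (Nat.leb a b) eqn:E
  end;
  rewrite ?Nat.eqb_eq, ?Nat.eqb_neq, ?Nat.leb_le, ?Nat.leb_nle, ?Nat.ltb_lt, ?Nat.ltb_nlt in *;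
  simpl in *.

Lemma sr_indf m n k v (g : nat -> R) : (m <= k <= n)%nat ->
  sum_range m n (fun c => (if Nat.eqb c k then v else 0) * g c) = v * g k.
Proof.
  intros H. rewrite <- (sr_ind m n k (v * g k)) by auto. apply sr_ext. intros c Hc.
  destruct (Nat.eqb c k) eqn:E; [apply Nat.eqb_eq in E; subst; ring| ring].
Qed.

Lemma row_j N alpha b (p : nat -> R) j : (1 <= j <= N)%nat ->
  sum_range 0 N (fun c => Astar N alpha b j c * p c) =
  alpha j * p 0%nat - b j * p j + (if Nat.ltb j N then b (S j) * p (S j) else 0).
Proof.
  intros H.
  transitivity (sum_range 0 N (fun c => (if Nat.eqb c 0 then alpha j else 0) * p c
     + (if Nat.eqb c j then - b j else 0) * p c
     + (if Nat.eqb c (S j) then (if Nat.ltb j N then b (S j) else 0) else 0) * p c)).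
  - apply sr_ext. intros c Hc. unfold Astar.
    destruct j as [|j']; [lia|]. bool_cases; subst; try lia; ring.
  - rewrite !sr_plus. rewrite (sr_indf 0 N 0) by lia. rewrite (sr_indf 0 N j) by lia.
    destruct (Nat.ltb j N) eqn:E.
    + apply Nat.ltb_lt in E. rewrite (sr_indf 0 N (S j)) by lia. ring.
    + rewrite (sr_ext 0 N _ (fun _ => 0)). rewrite sr_zero. ring.
      intros c _. destruct (Nat.eqb c (S j)); ring.
Qed.

Lemma row_0 N alpha b (p : nat -> R) : (1 <= N)%nat ->
  sum_range 0 N (fun c => Astar N alpha b 0 c * p c) = - alpha_sum N alpha * p 0%nat + b 1%nat * p 1%nat.
Proof.
  intros H.
  transitivity (sum_range 0 N (fun c => (if Nat.eqb c 0 then - alpha_sum N alpha else 0) * p c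
     + (if Nat.eqb c 1 then b 1%nat else 0) * p c)).
  - apply sr_ext. intros c Hc. unfold Astar. bool_cases; subst; try lia; ring.
  - rewrite sr_plus. rewrite (sr_indf 0 N 0) by lia. rewrite (sr_indf 0 N 1) by lia. ring.
Qed.

Lemma markov N alpha b : (1 <= N)%nat ->
  (forall j, (1 <= j <= N)%nat -> 0 <= alpha j) ->
  (forall j, (1 <= j <= N)%nat -> 0 < b j) ->
  markov_generator N (Agen N alpha b).
Proof.
  intros HN Ha Hb. split.
  - intros i j Hi Hj Hij. unfold Agen, Astar. bool_cases; subst; try lia; try lra.
    + apply Rlt_le, Hb; lia.
    + apply Ha; lia.
    + apply Rlt_le, Hb; lia.
  - intros i Hi. unfold Agen. destruct i as [|i'].
    + rewrite sr_first by lia.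
      replace (Astar N alpha b 0 0) with (- alpha_sum N alpha) by reflexivity. unfold alpha_sum.
      rewrite (sr_ext 1 N (fun j => Astar N alpha b j 0) alpha). ring.
      intros j Hj. unfold Astar. bool_cases; try lia; reflexivity.
    + transitivity (sum_range 0 N (fun c => (if Nat.eqb c (S i') then - b (S i') else 0) * 1
          + (if Nat.eqb c i' then b (S i') else 0) * 1)).
      * apply sr_ext. intros c Hc. unfold Astar. bool_cases; subst; try lia; ring.
      * rewrite sr_plus, !(sr_indf 0 N) by lia. ring.
Qed.

Lemma integral_id N alpha b u t (Hu : forall t, 0 <= t -> exists l, deriv_nonneg u t l)
  (pr : Riemann_integrable (fun s => Kfun N alpha b (t - s) * u s) 0 t) : 0 <= t ->
  RiemannInt pr = sum_range 1 N (fun m => alpha m * Phi b u 1 m t).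
Proof.
  intros Ht. rewrite <- RInt_Reals.
  transitivity (RInt (fun s => sum_range 1 N (fun m => alpha m *
     sum_range 1 m (fun i => b i * Pi b 1 m i * exp (- b i * t) * gfun b u i s))) 0 t).
  - apply RInt_ext. intros x Hx. rewrite Rmin_left, Rmax_right in Hx by lra.
    unfold Kfun. rewrite <- sr_scal_r. apply sr_ext. intros m Hm.
    unfold Kj. rewrite Rmult_assoc, <- sr_scal_r. f_equal. apply sr_ext. intros i Hi.
    unfold gfun, ut. rewrite Rmax_right by lra. unfold psi, Pi.
    replace (exp (- b i * (t - x))) with (exp (- b i * t) * exp (b i * x)).
    ring. rewrite <- exp_plus. f_equal. ring.
  - assert (Hi : forall m, ex_RInt (fun s => sum_range 1 m (fun i => b i * Pi b 1 m i * exp (- b i * t) * gfun b u i s)) 0 t /\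
       RInt (fun s => sum_range 1 m (fun i => b i * Pi b 1 m i * exp (- b i * t) * gfun b u i s)) 0 t
       = sum_range 1 m (fun i => RInt (fun s => b i * Pi b 1 m i * exp (- b i * t) * gfun b u i s) 0 t)).
    { intros m. apply (RInt_sr 1 m (fun i s => b i * Pi b 1 m i * exp (- b i * t) * gfun b u i s)).
      intros k _. apply ex_RInt_scal_R. apply gfun_int; auto. }
    pose proof (RInt_sr 1 N (fun m s => alpha m * sum_range 1 m (fun i => b i * Pi b 1 m i * exp (- b i * t) * gfun b u i s)) 0 t
      (fun k _ => ex_RInt_scal_R _ _ _ _ (proj1 (Hi k)))) as Hout.
    etransitivity; [apply (proj2 Hout)|].
    apply sr_ext. intros m Hm. rewrite RInt_scal_R by apply Hi. rewrite (proj2 (Hi m)).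
    f_equal. unfold Phi. apply sr_ext. intros i _. rewrite RInt_scal_R by (apply gfun_int; auto).
    unfold X, Ef. ring.
Qed.

Lemma ptil_sol N alpha b u u0 :
  (1 <= N)%nat ->
  (forall j, (1 <= j <= N)%nat -> 0 < b j) ->
  (forall i j, (1 <= i <= N)%nat -> (1 <= j <= N)%nat -> i <> j -> b i <> b j) ->
  u 0 = u0 ->
  (forall t, 0 <= t ->
     exists pr : Riemann_integrable (fun s => Kfun N alpha b (t - s) * u s) 0 t,
       deriv_nonneg u t (- alpha_sum N alpha * u t + RiemannInt pr)) ->
  is_solution N alpha b u0 (ptil N alpha b u).
Proof.
  intros HN Hb Hd Hu0 HuR.
  assert (Hu : forall t, 0 <= t -> exists l, deriv_nonneg u t l).
  { intros t Ht. destruct (HuR t Ht) as [pr H]. eauto. }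
  split.
  - intros i Hi. unfold ptil, p_init. destruct i as [|i']; simpl; auto.
    rewrite (sr_ext _ _ _ (fun _ => 0)). rewrite sr_zero. ring.
    intros m _. unfold Phi. rewrite (sr_ext _ _ _ (fun _ => 0)). rewrite sr_zero. ring.
    intros k _. unfold X, Ef. rewrite RInt_point. change (zero : R) with 0. ring.
  - intros t Ht i Hi. destruct i as [|j'].
    + rewrite row_0 by auto. destruct (HuR t Ht) as [pr H].
      apply (dn_ext_fun u); [intros; reflexivity|]. apply (dn_val _ _ _ _ H).
      rewrite (integral_id N alpha b u t Hu pr Ht). unfold ptil. simpl.
      assert (b 1%nat <> 0) by (apply Rgt_not_eq, Hb; lia). field. auto.
    + set (j := S j') in *. rewrite row_j by lia.
      apply (dn_ext_fun (fun s => / b j * sum_range j N (fun m => alpha m * Phi b u j m s))).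
      { intros s. reflexivity. }
      apply dn_val with (/ b j * sum_range j N (fun m => alpha m * dPhi b u j m t)).
      { apply dn_scal; auto. apply (dn_sum j N (fun m s => alpha m * Phi b u j m s)); auto.
        intros k _. apply dn_scal; auto. apply Phi_dn; auto. }
      rewrite (key N alpha b u Hd j t) by lia.
      unfold ptil. replace (Nat.eqb j 0) with false by reflexivity. simpl (Nat.eqb 0 0).
      replace (ut u t) with (u t) by (unfold ut; rewrite Rmax_right by lra; reflexivity).
      replace (Nat.eqb (S j) 0) with false by reflexivity.
      assert (b j <> 0) by (apply Rgt_not_eq, Hb; lia).
      destruct (Nat.ltb j N) eqn:E.
      * apply Nat.ltb_lt in E. assert (b (S j) <> 0) by (apply Rgt_not_eq, Hb; lia). field. auto.
      * apply Nat.ltb_nlt in E. rewrite (sr_empty (S j) N) by lia. field. auto.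
Qed.

Theorem theorem3p3 (N : nat) (alpha b : nat -> R) (u0 : R) (u : R -> R) :
  (1 <= N)%nat ->
  (forall j, (1 <= j <= N)%nat -> 0 <= alpha j) ->
  (forall j, (1 <= j <= N)%nat -> 0 < b j) ->
  (forall i j, (1 <= i <= N)%nat -> (1 <= j <= N)%nat -> i <> j -> b i <> b j) ->
  u 0 = u0 ->
  (forall t, 0 <= t ->
     exists pr : Riemann_integrable (fun s => Kfun N alpha b (t - s) * u s) 0 t,
       deriv_nonneg u t (- alpha_sum N alpha * u t + RiemannInt pr)) ->
  markov_generator N (Agen N alpha b) /\
  (exists p : R -> nat -> R, is_solution N alpha b u0 p) /\
  (forall p : R -> nat -> R, is_solution N alpha b u0 p ->
     forall t, 0 <= t -> p t 0%nat = u t).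
Proof.
  intros HN Ha Hb Hd Hu0 HuR.
  pose proof (ptil_sol N alpha b u u0 HN Hb Hd Hu0 HuR) as Hs.
  split; [apply markov; auto|]. split; [eauto|].
  intros p [Hp0 Hpd] t Ht. destruct Hs as [Hs0 Hsd].
  pose proof (ode_unique N (Astar N alpha b) (fun s i => p s i - ptil N alpha b u s i)) as HU.
  assert (Hz : p t 0%nat - ptil N alpha b u t 0%nat = 0).
  { apply HU; auto; try lia.
    - intros i Hi. rewrite Hp0, Hs0 by auto. ring.
    - intros s Hs i Hi. apply dn_val with
        (sum_range 0 N (fun c => Astar N alpha b i c * p s c) - sum_range 0 N (fun c => Astar N alpha b i c * ptil N alpha b u s c)).
      + apply (dn_minus (fun s => p s i) (fun s => ptil N alpha b u s i)); auto.
      + rewrite <- sr_minus. apply sr_ext. intros; ring. }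
  unfold ptil in Hz. simpl in Hz. lra.
Qed.
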